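(* Algorithm $R_A$ (described in the context) is strategyproof over the domain of all monotonic profiles (for $n$ agents and alternatives $\{A,B\}$) that admit a unique stable assignment.
   Context: Agents $V=\{v_1,\dots,v_n\}$; two alternatives $A,B$. Each agent $v_i$ has a strict total order $\succ_i$ on $\{A,B\}\times\{1,\dots,n\}$, where $(S,j)$ means being in the community adopting $S$ of size $j$; it is monotonic if $(S,j)\succ_i(S,k)$ whenever $k<j$. An assignment is a map $f:V\to\{A,B\}$; $v_i$ prefers $f$ to $g$ if $(f(v_i),|f^{-1}(f(v_i))|)\succ_i(g(v_i),|g^{-1}(g(v_i))|)$. An assignment $f$ is stable if there is no assignment $f'\neq f$ such that every agent $v_i$ with $f'(v_i)\neq f(v_i)$ prefers $f'$ to $f$. Algorithm $R_A$: set $V_A=V$, $V_B=\emptyset$, $a=|V_A|$, $b=|V_B|$. Repeat: let $k$ be the largest $j\in\{1,\dots,a\}$ with $|\{v_i\in V_A:(B,b+j)\succ_i(A,a)\}|\ge j$, or $k=0$ if none exists. If $k=0$, output $f$ with $f^{-1}(A)=V_A$, $f^{-1}(B)=V_B$. Otherwise let $X=\{v_i\in V_A:(B,b+k)\succ_i(A,a)\}$, move $X$ from $V_A$ to $V_B$, update $a,b$, and repeat. A rule $R$ is strategyproof over a domain $D$ of profiles if for every $V\in D$ with $f=R(V)$ there is no agent $v_i$ and monotonic order $\succ_i'$ such that, with $V'$ obtained from $V$ by replacing $\succ_i$ by $\succ_i'$ and $f'=R(V')$, agent $v_i$ prefers $f'$ to $f$ according to her true order $\succ_i$. *)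

(* Defs.v *)
From HB Require Import structures.
From mathcomp Require Import all_boot.
Set Implicit Arguments. Unset Strict Implicit. Unset Printing Implicit Defensive.

Inductive alt := A | B.
Definition alt2bool (x : alt) : bool := if x is A then true else false.
Definition bool2alt (b : bool) : alt := if b then A else B.
Lemma alt2boolK : cancel alt2bool bool2alt. Proof. by case. Qed.
HB.instance Definition _ := Finite.copy alt (can_type alt2boolK).

(* A preference of an agent: r (S,j) (T,k) means (S,j) is strictly preferred
   to (T,k), i.e. (S,j) >_i (T,k). Only pairs with 1 <= j <= n are relevant. *)
Definition pref := rel (alt * nat).

Definition indom (n : nat) (x : alt * nat) : bool := (0 < x.2 <= n).

Definition strict_total_order (n : nat) (r : pref) : Prop :=
  [/\ (forall x, indom n x -> ~~ r x x),
      (forall x y z, indom n x -> indom n y -> indom n z ->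
          r x y -> r y z -> r x z)
    & (forall x y, indom n x -> indom n y -> x != y -> r x y || r y x)].

Definition monotonic (n : nat) (r : pref) : Prop :=
  strict_total_order n r /\
  (forall S j k, 0 < k -> k < j -> j <= n -> r (S, j) (S, k)).

Definition profile (n : nat) := 'I_n -> pref.

Definition assignment (n : nat) := {ffun 'I_n -> alt}.

Definition csize n (f : assignment n) (i : 'I_n) : nat :=
  #|[pred j | f j == f i]|.

Definition prefers n (r : pref) (i : 'I_n) (f g : assignment n) : bool :=
  r (f i, csize f i) (g i, csize g i).

Definition stable n (P : profile n) (f : assignment n) : Prop :=
  ~ exists f' : assignment n,
      f' != f /\ (forall i, f' i != f i -> prefers (P i) i f' f).

(* state: the current set V_A; V_B is its complement; a = #|V_A|, b = n - a *)
Section RA.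
Variables (n : nat) (P : profile n).

Definition RA_X (VA : {set 'I_n}) (j : nat) : {set 'I_n} :=
  [set v in VA | P v (B, (n - #|VA|) + j) (A, #|VA|)].

(* the largest j in {1..a} with |X_j| >= j, or 0 if none *)
Definition RA_k (VA : {set 'I_n}) : nat :=
  \max_(j < #|VA|.+1 | (0 < (j : nat)) && ((j : nat) <= #|RA_X VA j|)) (j : nat).

Definition RA_step (VA : {set 'I_n}) : {set 'I_n} :=
  if RA_k VA == 0 then VA else VA :\: RA_X VA (RA_k VA).

(* Each non-terminal step removes at least one agent from V_A, so after n
   iterations the loop has terminated (a terminal state is a fixed point). *)
Definition RA_final : {set 'I_n} := iter n RA_step [set: 'I_n].

Definition RA : assignment n :=
  [ffun v => if v \in RA_final then A else B].
End RA.

Definition update n (P : profile n) (i : 'I_n) (r' : pref) : profile n :=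
  fun j => if j == i then r' else P j.

Definition monotonic_profile n (P : profile n) : Prop :=
  forall i, monotonic n (P i).

Definition unique_stable_domain n (P : profile n) : Prop :=
  monotonic_profile P /\ exists! f : assignment n, stable P f.

Definition strategyproof_over n (R : profile n -> assignment n)
    (D : profile n -> Prop) : Prop :=
  forall P, D P -> forall (i : 'I_n) (r' : pref), monotonic n r' ->
    ~~ prefers (P i) i (R (update P i r')) (R P).

(* Main.v *)
Require Import Defs.
From mathcomp Require Import all_boot zify.
Set Implicit Arguments. Unset Strict Implicit. Unset Printing Implicit Defensive.


Lemma irr n r x : monotonic n r -> indom n x -> ~~ r x x.
Proof. by case=> -[H _ _] _ /H. Qed.

Lemma trn n r x y z : monotonic n r -> indom n x -> indom n y -> indom n z ->
  r x y -> r y z -> r x z.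
Proof. by case=> -[_ H _] _; apply: H. Qed.

Lemma asym n r x y : monotonic n r -> indom n x -> indom n y -> r x y -> ~~ r y x.
Proof.
move=> M dx dy rxy; apply/negP => ryx.
by move: (irr M dx); rewrite (trn M dx dy dx rxy ryx).
Qed.

Lemma tot n r x y : monotonic n r -> indom n x -> indom n y -> x != y -> ~~ r x y -> r y x.
Proof. by case=> -[_ _ H] _ dx dy xy /negbTE nr; move: (H x y dx dy xy); rewrite nr. Qed.

Lemma mono n r S j k : monotonic n r -> 0 < k -> k < j -> j <= n -> r (S, j) (S, k).
Proof. by case=> _ H; apply: H. Qed.

Lemma upl n r S j j' y : monotonic n r -> 0 < j -> j <= j' -> j' <= n -> indom n y ->
  r (S, j) y -> r (S, j') y.
Proof.
move=> M j0 jj j'n dy H.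
case: (ltngtP j j') jj => // [jlt _ | <- _ //].
apply: (trn M _ _ dy (mono S M j0 jlt j'n) H); rewrite /indom /=; lia.
Qed.

Lemma downr n r S j j' x : monotonic n r -> 0 < j' -> j' <= j -> j <= n -> indom n x ->
  r x (S, j) -> r x (S, j').
Proof.
move=> M j0 jj jn dx H.
case: (ltngtP j' j) jj => // [jlt _ | -> _ //].
apply: (trn M dx _ _ H (mono S M j0 jlt jn)); rewrite /indom /=; lia.
Qed.

Lemma both n r S T j j' k k' : monotonic n r -> 0 < j -> j <= j' -> j' <= n ->
  0 < k' -> k' <= k -> k <= n -> r (S, j) (T, k) -> r (S, j') (T, k').
Proof.
move=> M j0 jj j'n k0 kk kn H.
apply: (downr M k0 kk kn); first by rewrite /indom /=; lia.
apply: (upl M j0 jj j'n) => //; rewrite /indom /=; lia.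
Qed.

Lemma noback n r S j k : monotonic n r -> 0 < j -> j <= k -> k <= n -> r (S, j) (S, k) -> False.
Proof.
move=> M j0 jk kn H.
have [jlt|kj] := ltnP j k.
- have dj : indom n (S, j) by rewrite /indom /=; lia.
  have dk : indom n (S, k) by rewrite /indom /=; lia.
  by move: (asym M dj dk H); rewrite (mono S M j0 jlt kn).
- have e : k = j by lia.
  subst k; have dj : indom n (S, j) by rewrite /indom /=; lia.
  by move: (irr M dj); rewrite H.
Qed.

Lemma k_ge n (P : profile n) (V : {set 'I_n}) j : 0 < j -> j <= #|V| -> j <= #|RA_X P V j| -> j <= RA_k P V.
Proof.
move=> j0 jV jX; have jo : j < #|V|.+1 by [].
rewrite /RA_k.
apply: (@leq_bigmax_cond _ (fun i : 'I_#|V|.+1 => (0 < (i : nat)) && ((i : nat) <= #|RA_X P V i|))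
   (fun i : 'I_#|V|.+1 => (i : nat)) (Ordinal jo)); by rewrite /= j0 jX.
Qed.

Lemma k_spec n (P : profile n) (V : {set 'I_n}) : 0 < RA_k P V ->
  RA_k P V <= #|V| /\ RA_k P V <= #|RA_X P V (RA_k P V)|.
Proof.
rewrite /RA_k.
set K := fun x => (x == 0) || ((x <= #|V|) && (x <= #|RA_X P V x|)).
suff: K (\max_(j < #|V|.+1 | (0 < (j : nat)) && ((j : nat) <= #|RA_X P V j|)) (j : nat)).
  by rewrite /K; case/orP => [/eqP -> //| /andP[]].
apply: (big_ind K).
- by rewrite /K eqxx.
- move=> x y; rewrite /maxn; case: (x < y) => //.
- move=> i /andP[i0 iX]; rewrite /K; apply/orP; right; rewrite iX andbT.
  by have := ltn_ord i; rewrite ltnS.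
Qed.

Lemma X_sub n (P : profile n) (V : {set 'I_n}) j : RA_X P V j \subset V.
Proof. by apply/subsetP => v; rewrite inE => /andP[]. Qed.

Lemma inX n (P : profile n) (V : {set 'I_n}) j v : (v \in RA_X P V j) = (v \in V) && P v (B, (n - #|V|) + j) (A, #|V|).
Proof. by rewrite inE. Qed.

Lemma step_sub n (P : profile n) (V : {set 'I_n}) : RA_step P V \subset V.
Proof. by rewrite /RA_step; case: ifP => // _; apply: subsetDl. Qed.

Lemma step0 n (P : profile n) (V : {set 'I_n}) : RA_k P V = 0 -> RA_step P V = V.
Proof. by rewrite /RA_step => ->. Qed.

Lemma stepS n (P : profile n) (V : {set 'I_n}) : 0 < RA_k P V -> RA_step P V = V :\: RA_X P V (RA_k P V).
Proof. by rewrite /RA_step; case: eqP => // ->. Qed.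

Lemma card_step n (P : profile n) (V : {set 'I_n}) : 0 < RA_k P V ->
  #|RA_step P V| + #|RA_X P V (RA_k P V)| = #|V|.
Proof.
move=> k0; rewrite stepS // -(cardsID (RA_X P V (RA_k P V)) V) addnC.
by rewrite (setIidPr (X_sub _ _ _)).
Qed.

Definition run n (P : profile n) m := iter m (RA_step P) [set: 'I_n].

Lemma run_final n (P : profile n) : RA_final P = run P n.
Proof. by []. Qed.

Lemma run_mono n (P : profile n) m m' : m <= m' -> run P m' \subset run P m.
Proof.
move/subnK <-; elim: (m' - m) => [|d IH]; first by rewrite add0n.
rewrite addSn /run iterS; apply: subset_trans IH; exact: step_sub.
Qed.

Lemma final_k0 n (P : profile n) : RA_k P (RA_final P) = 0.
Proof.
suff H : forall m, (RA_k P (run P m) == 0) || (#|run P m| + m <= n).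
  move: (H n); case/orP => [/eqP //| c].
  have c0 : #|run P n| = 0 by lia.
  rewrite run_final; case: (posnP (RA_k P (run P n))) => // /k_spec[]; lia.
elim=> [|m IH]; first by rewrite /run /= cardsT card_ord addn0 leqnn orbT.
rewrite /run iterS -/(run P m).
case: (posnP (RA_k P (run P m))) => [k0|k0].
- by rewrite step0 // k0.
- apply/orP; right; have := card_step k0; have := k_spec k0.
  case/orP: IH => [/eqP|]; first by move=> e; rewrite e in k0.
  lia.
Qed.

Lemma cardV n (V : {set 'I_n}) : #|V| <= n.
Proof. by have := max_card (mem V); rewrite card_ord. Qed.

Lemma cardCV n (V : {set 'I_n}) : #|~: V| = n - #|V|.
Proof. have := cardsC V; rewrite card_ord; lia. Qed.

Lemma cardsub (T : finType) (S V : {set T}) : S \subset V -> #|S| <= #|V|.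
Proof. exact: subset_leq_card. Qed.

Definition Astab n (Q : profile n) (V : {set 'I_n}) : Prop :=
  forall S : {set 'I_n}, S \subset V -> S != set0 ->
    ~ (forall v, v \in S -> Q v (B, n - #|V| + #|S|) (A, #|V|)).

Definition Bstab n (Q : profile n) (V : {set 'I_n}) : Prop :=
  forall T : {set 'I_n}, T \subset ~: V -> T != set0 ->
    ~ (forall v, v \in T -> Q v (A, #|V| + #|T|) (B, n - #|V|)).

Lemma R1 n (Q : profile n) : Astab Q (RA_final Q).
Proof.
move=> S SV S0 H.
have : #|S| <= RA_k Q (RA_final Q).
  apply: k_ge; first by rewrite card_gt0.
  - exact: cardsub.
  - apply: cardsub; apply/subsetP => v vS; rewrite inX (subsetP SV v vS) /=.
    exact: H.
by rewrite final_k0 leqn0 cards_eq0 (negbTE S0).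
Qed.

Lemma Binv n (Q : profile n) (M : monotonic_profile Q) m :
  forall T : {set 'I_n}, T \subset ~: run Q m -> T != set0 ->
  exists2 v, v \in T & Q v (B, n - #|run Q m|) (A, #|run Q m| + #|T|).
Proof.
elim: m => [|m IH] T.
  rewrite /run /= setCT subset0 => /eqP ->; by rewrite eqxx.
rewrite /run iterS -/(run Q m).
set V := run Q m.
case: (posnP (RA_k Q V)) => [k0|k0].
  by rewrite step0 //; apply: IH.
set X := RA_X Q V (RA_k Q V).
have cs := card_step k0; have [kV kX] := k_spec k0.
rewrite -/X in cs kX.
have XV : X \subset V by apply: X_sub.
have cV := cardV V.
move=> TC T0.
have cT := cardsID X T.
have TX : #|T :&: X| <= #|X| by apply: cardsub; apply: subsetIr.
have cT0 : 0 < #|T| by rewrite card_gt0.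
case: (eqVneq (T :\: X) set0) => [T1e | T1n].
- move/eqP: T1e; rewrite setD_eq0 => TsX.
  have [v vT] := set0Pn _ T0.
  have vX := subsetP TsX v vT.
  move: (vX); rewrite inX => /andP[_ H].
  have cTX : #|T| <= #|X| by apply: cardsub.
  exists v => //.
  apply: (both (M v) _ _ _ _ _ _ H); lia.
- have T1C : T :\: X \subset ~: V.
    apply/subsetP => v; rewrite !inE => /andP[vX vT].
    have := subsetP TC v vT; rewrite stepS // !inE negb_and negbK (negbTE vX) /=.
    by [].
  have [v] := IH _ T1C T1n.
  rewrite inE => /andP[_ vT] H; exists v => //; rewrite -/V in H.
  have c1 := cardsub T1C; rewrite cardCV in c1.
  have c10 : 0 < #|T :\: X| by rewrite card_gt0.
  have c2 : 0 < n - #|V| by apply: leq_trans c10 c1.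
  apply: (both (M v) _ _ _ _ _ _ H); lia.
Qed.

Lemma R2 n (Q : profile n) (M : monotonic_profile Q) : Bstab Q (RA_final Q).
Proof.
move=> T TC T0 H.
have [v vT H'] := Binv M TC T0.
have := H v vT; rewrite -run_final in H'.
have c1 := cardsub TC; rewrite cardCV in c1.
have c0 : 0 < #|T| by rewrite card_gt0.
have c2 : 0 < n - #|RA_final Q| by apply: leq_trans c0 c1.
set a := #|RA_final Q| in c1 c2 H H' *; set t := #|T| in c0 c1 H H' *.
have dB : indom n (B, n - a) by rewrite /indom /=; lia.
have dA : indom n (A, a + t) by rewrite /indom /=; lia.
by move=> HA; move: (asym (M v) dB dA H'); rewrite HA.
Qed.



Lemma R4 n (Q : profile n) (M : monotonic_profile Q) (W : {set 'I_n}) :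
  Astab Q W -> W \subset RA_final Q.
Proof.
move=> HA; rewrite run_final.
suff H : forall m, W \subset run Q m by apply: H.
elim=> [|m IH]; first by apply: subsetT.
rewrite /run iterS -/(run Q m).
set V := run Q m in IH *.
case: (posnP (RA_k Q V)) => [k0|k0]; first by rewrite step0.
rewrite stepS //.
set X := RA_X Q V (RA_k Q V).
have [kV kX] := k_spec k0; rewrite -/X in kX.
case: (eqVneq (W :&: X) set0) => [Te|T0].
  apply/subsetP => w wW; rewrite in_setD (subsetP IH w wW) andbT.
  apply/negP => wX; have : w \in W :&: X by rewrite inE wW.
  by rewrite Te inE.
exfalso; apply: (HA _ (subsetIl W X) T0) => v.
rewrite inE => /andP[vW]; rewrite inX => /andP[vV Hv].
have c1 := cardsID W X.
have c2 : #|X :\: W| <= #|V :\: W|.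
  by apply: cardsub; apply: setSD; apply: X_sub.
have c3 := cardsID W V; rewrite (setIidPr IH) in c3.
have c4 : #|W :&: X| <= #|W| by apply: cardsub; apply: subsetIl.
have c5 : 0 < #|W :&: X| by rewrite card_gt0.
have c6 := cardV V.
rewrite setIC in c1.
set k := RA_k Q V in kV kX Hv k0 *.
set a := #|V| in kV Hv c3 c6 *; set w := #|W| in c3 c4 *.
set t := #|W :&: X| in c1 c4 c5 *; set x := #|X| in c1 kX *.
set d1 := #|X :\: W| in c1 c2 *; set d2 := #|V :\: W| in c2 c3 *.
apply: (both (M v) _ _ _ _ _ _ Hv); lia.
Qed.

Definition asg n (V : {set 'I_n}) : assignment n := [ffun v => if v \in V then A else B].

Lemma RA_asg n (P : profile n) : RA P = asg (RA_final P).
Proof. by []. Qed.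

Lemma csize_asg n (V : {set 'I_n}) v :
  csize (asg V) v = if v \in V then #|V| else n - #|V|.
Proof.
rewrite /csize ffunE; case: ifP => vV.
- by apply: eq_card => j; rewrite inE ffunE; case: (j \in V).
- rewrite -cardCV; apply: eq_card => j; rewrite inE ffunE !inE; by case: (j \in V).
Qed.

Lemma csize_gen n (g : assignment n) v :
  csize g v = if g v == A then #|[set j | g j == A]| else n - #|[set j | g j == A]|.
Proof.
rewrite /csize; case: ifP => /eqP gv.
- by apply: eq_card => j; rewrite !inE gv.
- rewrite -cardCV; apply: eq_card => j; rewrite !inE.
  by case: (g v) gv => // _; case: (g j).
Qed.

Lemma R3 n (Q : profile n) (M : monotonic_profile Q) (V : {set 'I_n}) :
  Astab Q V -> Bstab Q V -> stable Q (asg V).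
Proof.
move=> HA HB [g [gne Hg]].
set S := [set v in V | g v == B].
set T := [set v in ~: V | g v == A].
set SA := [set j | g j == A].
have SV : S \subset V by apply/subsetP => v; rewrite inE => /andP[].
have TC : T \subset ~: V by apply/subsetP => v; rewrite inE => /andP[].
have e1 : SA :&: V = V :\: S.
  apply/setP => v; rewrite !inE; case: (v \in V); rewrite ?andbF ?andbT //.
  by case: (g v).
have e2 : SA :\: V = T.
  apply/setP => v; rewrite !inE; case: (v \in V) => //=; by rewrite andbC.
have c1 := cardsID V SA; rewrite e1 e2 in c1.
have c2 := cardsID S V; rewrite (setIidPr SV) in c2.
have c3 := cardsub TC; rewrite cardCV in c3.
have c4 := cardV V.
have gS : forall v, v \in S -> Q v (B, n - #|SA|) (A, #|V|).
  move=> v; rewrite inE => /andP[vV /eqP gv].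
  have := Hg v; rewrite /prefers csize_gen csize_asg !ffunE vV gv /=.
  by apply.
have gT : forall v, v \in T -> Q v (A, #|SA|) (B, n - #|V|).
  move=> v; rewrite inE => /andP[vV /eqP gv]; rewrite inE in vV.
  have := Hg v; rewrite /prefers csize_gen csize_asg !ffunE (negbTE vV) gv /=.
  by apply.
have [TS|ST] := leqP #|T| #|S|.
- case: (eqVneq S set0) => [S0|S0].
  + have T0 : T = set0.
      by apply/eqP; rewrite -cards_eq0 -leqn0; move: TS; rewrite S0 cards0.
    move/eqP: gne; apply; apply/ffunP => v; rewrite ffunE.
    case vV: (v \in V); case gv: (g v) => //.
    * have : v \in S by rewrite inE vV gv.
      by rewrite S0 inE.
    * have : v \in T by rewrite inE inE vV gv.
      by rewrite T0 inE.
  + apply: (HA S SV S0) => v vS; have H := gS v vS.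
    have c5 : 0 < #|S| by rewrite card_gt0.
    set s := #|S| in c2 TS c5 H *; set t := #|T| in c1 c3 TS *.
    set a := #|V| in c1 c2 c3 c4 H *; set sa := #|SA| in c1 H *.
    set d := #|V :\: S| in c1 c2 *.
    apply: (both (M v) _ _ _ _ _ _ H); lia.
- have T0 : T != set0 by rewrite -card_gt0; apply: leq_ltn_trans ST.
  apply: (HB T TC T0) => v vT; have H := gT v vT.
  set s := #|S| in c2 ST H *; set t := #|T| in c1 c3 ST *.
  set a := #|V| in c1 c2 c3 c4 H *; set sa := #|SA| in c1 H *.
  set d := #|V :\: S| in c1 c2 *.
  apply: (both (M v) _ _ _ _ _ _ H); lia.
Qed.

Lemma agreeX n (P1 P2 : profile n) i V j v : (forall v, v != i -> P1 v = P2 v) -> v != i ->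
  (v \in RA_X P1 V j) = (v \in RA_X P2 V j).
Proof. by move=> H vi; rewrite !inX H. Qed.

Lemma k_le n (P1 P2 : profile n) i (V : {set 'I_n}) : (forall v, v != i -> P1 v = P2 v) ->
  i \in RA_step P2 V -> RA_k P2 V <= RA_k P1 V.
Proof.
move=> H; case: (posnP (RA_k P2 V)) => [->|k0] // .
rewrite stepS // in_setD => /andP[iX _].
have [kV kX] := k_spec k0; apply: k_ge => //.
apply: leq_trans kX _; apply: cardsub; apply/subsetP => v vX.
have vi : v != i by apply/eqP => e; move: vX; rewrite e (negbTE iX).
by rewrite (agreeX _ _ H vi).
Qed.

Lemma step_eq n (P1 P2 : profile n) i (V : {set 'I_n}) : (forall v, v != i -> P1 v = P2 v) ->
  i \in RA_step P1 V -> i \in RA_step P2 V -> RA_step P1 V = RA_step P2 V.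
Proof.
move=> H i1 i2.
have H' : forall v, v != i -> P2 v = P1 v by move=> v vi; rewrite H.
have ek : RA_k P1 V = RA_k P2 V.
  by apply/eqP; rewrite eqn_leq (k_le H' i1) (k_le H i2).
case: (posnP (RA_k P1 V)) => [k0|k0].
  by rewrite !step0 // -ek.
have k0' : 0 < RA_k P2 V by rewrite -ek.
move: i1 i2; rewrite !stepS // !in_setD => /andP[i1 _] /andP[i2 _].
congr (V :\: _); apply/setP => v; rewrite ek.
case: (eqVneq v i) => [->|vi]; first by rewrite (negbTE i2) -ek (negbTE i1).
by rewrite (agreeX _ _ H vi).
Qed.

Lemma run_eq n (P1 P2 : profile n) i : (forall v, v != i -> P1 v = P2 v) ->
  forall m, i \in run P1 m -> i \in run P2 m -> run P1 m = run P2 m.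
Proof.
move=> H; elim=> [//|m IH] i1 i2.
have i1' := subsetP (run_mono P1 (leqnSn m)) i i1.
have i2' := subsetP (run_mono P2 (leqnSn m)) i i2.
move: i1 i2; rewrite /run !iterS -/(run P1 m) -/(run P2 m) (IH i1' i2').
exact: step_eq.
Qed.

Lemma Astab_tr n (P1 P2 : profile n) (V : {set 'I_n}) :
  (forall v, v \in V -> P1 v = P2 v) -> Astab P1 V -> Astab P2 V.
Proof.
move=> H HA S SV S0 Hall; apply: (HA S SV S0) => v vS.
by rewrite H ?(subsetP SV) //; apply: Hall.
Qed.

Lemma Bstab_tr n (P1 P2 : profile n) (V : {set 'I_n}) :
  (forall v, v \in ~: V -> P1 v = P2 v) -> Bstab P1 V -> Bstab P2 V.
Proof.
move=> H HB S SV S0 Hall; apply: (HB S SV S0) => v vS.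
by rewrite H ?(subsetP SV) //; apply: Hall.
Qed.

Theorem lemma1 (n : nat) :
  strategyproof_over (@RA n) (@unique_stable_domain n).
Proof.
move=> P [MP [f0 [Sf0 Uf0]]] i r' Mr'; apply/negP => Hpref.
set P' := update P i r' in Hpref.
have MP' : monotonic_profile P'.
  by move=> j; rewrite /P' /update; case: eqP.
have agree : forall v, v != i -> P v = P' v.
  by move=> v /negbTE vi; rewrite /P' /update vi.
have agreeS : forall v, v != i -> P' v = P v by move=> v vi; rewrite agree.
have Mi := MP i.
move: Hpref; rewrite !RA_asg /prefers !csize_asg !ffunE.
set V := RA_final P; set V' := RA_final P'.
have stV : stable P (asg V) := R3 MP (@R1 n P) (R2 MP).
have uniq : forall W, stable P (asg W) -> asg W = asg V.
  by move=> W sW; rewrite -(Uf0 _ sW) -(Uf0 _ stV).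
have cV := cardV V; have cV' := cardV V'.
case iV : (i \in V); case iV' : (i \in V') => Hp.
-
  have e : V = V' by apply: (run_eq agree iV iV').
  rewrite -e in Hp.
  have c0 : 0 < #|V| by rewrite card_gt0; apply/set0Pn; exists i.
  set a := #|V| in c0 cV Hp; exact: (noback Mi c0 (leqnn a) cV Hp).
-
  have AV' : Astab P V'.
    apply: (Astab_tr _ (@R1 n P')) => v vV'; apply: agreeS.
    by apply/eqP => e; rewrite e iV' in vV'.
  have VV' : V' \subset V by apply: R4.
  have BV' : Bstab P V'.
    move=> T TC T0 Hall.
    case iT : (i \in T); last first.
      apply: (R2 MP' TC T0) => v vT; rewrite -agree; first exact: Hall.
      by apply/eqP => e; rewrite e iT in vT.
    have c1 := cardsID V' V; rewrite (setIidPr VV') in c1.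
    have c2 := cardsub TC; rewrite cardCV in c2.
    have c3 := cardsID V T.
    have c4 : #|T :&: V| <= #|V :\: V'|.
      apply: cardsub; apply/subsetP => v; rewrite !inE => /andP[vT ->].
      by have := subsetP TC v vT; rewrite inE => ->.
    have c5 : 0 < #|T| by rewrite card_gt0.
    have c6 : 0 < n - #|V'|.
      by rewrite -cardCV card_gt0; apply/set0Pn; exists i; rewrite inE iV'.
    case: (eqVneq (T :\: V) set0) => [W0|W0].
    + have H := Hall i iT.
      have cW : #|T :\: V| = 0 by rewrite W0 cards0.
      set t := #|T| in c2 c3 c5 H *; set a := #|V| in c1 cV Hp *.
      set a' := #|V'| in c1 c2 c6 cV' H Hp *.
      set d1 := #|V :\: V'| in c1 c4 *; set d2 := #|T :&: V| in c3 c4 *.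
      set d3 := #|T :\: V| in c3 cW *.
      have dA : indom n (A, a' + t) by rewrite /indom /=; clear -c1 c2 c3 c4 c5 c6 cV cV' cW; lia.
      have dB : indom n (B, n - a') by rewrite /indom /=; clear -c1 c2 c3 c4 c5 c6 cV cV' cW; lia.
      have dA2 : indom n (A, a) by rewrite /indom /=; clear -c1 c2 c3 c4 c5 c6 cV cV' cW; lia.
      have H2 := trn Mi dA dB dA2 H Hp.
      apply: (noback Mi _ _ _ H2); clear -c1 c2 c3 c4 c5 c6 cV cV' cW; lia.
    + have WC : T :\: V \subset ~: V by apply/subsetP => v; rewrite !inE => /andP[].
      apply: (R2 MP WC W0) => v; rewrite inE => /andP[_ vT].
      have H := Hall v vT.
      have c7 := cardsub WC; rewrite cardCV in c7.
      have c8 : 0 < #|T :\: V| by rewrite card_gt0.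
      set t := #|T| in c2 c3 c5 H *; set a := #|V| in c1 cV c7 *.
      set a' := #|V'| in c1 c2 c6 cV' H *.
      set d1 := #|V :\: V'| in c1 c4 *; set d2 := #|T :&: V| in c3 c4 *.
      set d3 := #|T :\: V| in c3 c7 c8 *.
      apply: (both (MP v) _ _ _ _ _ _ H); clear -c1 c2 c3 c4 c5 c6 c7 c8 cV cV'; lia.
  have := uniq _ (R3 MP AV' BV') => /ffunP /(_ i); rewrite !ffunE iV iV'.
  by [].
-
  have BV' : Bstab P V'.
    apply: (Bstab_tr _ (R2 MP')) => v vV'; apply: agreeS.
    by apply/eqP => e; move: vV'; rewrite e inE iV'.
  have AV : Astab P' V.
    apply: (Astab_tr _ (@R1 n P)) => v vV; apply: agree.
    by apply/eqP => e; rewrite e iV in vV.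
  have VV' : V \subset V' by apply: R4.
  have AV' : Astab P V'.
    move=> S SV' S0 Hall.
    case iS : (i \in S); last first.
      apply: (@R1 n P' S SV' S0) => v vS; rewrite -agree; first exact: Hall.
      by apply/eqP => e; rewrite e iS in vS.
    have c1 := cardsID V V'; rewrite (setIidPr VV') in c1.
    have c2 := cardsub SV'.
    have c3 := cardsID V S.
    have c4 : #|S :\: V| <= #|V' :\: V|.
      apply: cardsub; apply/subsetP => v; rewrite !inE => /andP[-> vS].
      by rewrite (subsetP SV' v vS).
    have c5 : 0 < #|S| by rewrite card_gt0.
    have c6 : 0 < n - #|V|.
      by rewrite -cardCV card_gt0; apply/set0Pn; exists i; rewrite inE iV.
    case: (eqVneq (S :&: V) set0) => [W0|W0].
    + have H := Hall i iS.
      have cW : #|S :&: V| = 0 by rewrite W0 cards0.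
      set s := #|S| in c2 c3 c5 H *; set a := #|V| in c1 c6 cV Hp *.
      set a' := #|V'| in c1 c2 cV' H Hp *.
      set d1 := #|V' :\: V| in c1 c4 *; set d2 := #|S :\: V| in c3 c4 *.
      set d3 := #|S :&: V| in c3 cW *.
      have dB : indom n (B, n - a' + s) by rewrite /indom /=; clear -c1 c2 c3 c4 c5 c6 cV cV' cW; lia.
      have dA : indom n (A, a') by rewrite /indom /=; clear -c1 c2 c3 c4 c5 c6 cV cV' cW; lia.
      have dB2 : indom n (B, n - a) by rewrite /indom /=; clear -c1 c2 c3 c4 c5 c6 cV cV' cW; lia.
      have H2 := trn Mi dB dA dB2 H Hp.
      apply: (noback Mi _ _ _ H2); clear -c1 c2 c3 c4 c5 c6 cV cV' cW; lia.
    + have WV : S :&: V \subset V by apply: subsetIr.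
      apply: (@R1 n P _ WV W0) => v; rewrite inE => /andP[vS _].
      have H := Hall v vS.
      have c8 : 0 < #|S :&: V| by rewrite card_gt0.
      have c9 : #|S :&: V| <= #|V| by apply: cardsub.
      set s := #|S| in c2 c3 c5 H *; set a := #|V| in c1 c6 c9 cV *.
      set a' := #|V'| in c1 c2 cV' H *.
      set d1 := #|V' :\: V| in c1 c4 *; set d2 := #|S :\: V| in c3 c4 *.
      set d3 := #|S :&: V| in c3 c8 c9 *.
      apply: (both (MP v) _ _ _ _ _ _ H); clear -c1 c2 c3 c4 c5 c6 c8 c9 cV cV'; lia.
  have := uniq _ (R3 MP AV' BV') => /ffunP /(_ i); rewrite !ffunE iV iV'.
  by [].
-
  have AV : Astab P' V.
    apply: (Astab_tr _ (@R1 n P)) => v vV; apply: agree.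
    by apply/eqP => e; rewrite e iV in vV.
  have AV' : Astab P V'.
    apply: (Astab_tr _ (@R1 n P')) => v vV'; apply: agreeS.
    by apply/eqP => e; rewrite e iV' in vV'.
  have e : V = V' by apply/eqP; rewrite eqEsubset (R4 MP AV') (R4 MP' AV).
  rewrite -e in Hp.
  have c6 : 0 < n - #|V|.
    by rewrite -cardCV card_gt0; apply/set0Pn; exists i; rewrite inE iV.
  set a := #|V| in c6 cV Hp.
  apply: (noback Mi c6 (leqnn _) _ Hp); clear -cV; lia.
Qed.
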